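(* Let $k\ge 0$. Let $\mathcal{T}_k$ be the set of pairs of sequences $(b_1,\dots,b_k)$, $(t_1,\dots,t_k)$ such that $\{b_1,\dots,b_k,t_1,\dots,t_k\}=\{1,2,\dots,2k\}$, $b_1>b_2>\dots>b_k$, $t_1>t_2>\dots>t_k$, and $t_i<b_i$ for every $i$. For such a pair let $w$ be the word $b_k\,t_k\,b_{k-1}\,t_{k-1}\cdots b_1\,t_1$ (a permutation of $\{1,\dots,2k\}$). Then $$\sum_{(b,t)\in\mathcal{T}_k} q^{\mathrm{inv}(w)} = q^k\,C_k(q).$$
   Context: For a word/permutation $w=w_1\cdots w_m$, $\mathrm{inv}(w)=\#\{(i,j): i<j,\ w_i>w_j\}$. A Dyck path of length $k$ is a lattice path from $(0,0)$ to $(k,k)$ with unit steps $(1,0)$ (EAST) and $(0,1)$ (NORTH) containing no point $(x,y)$ with $x>y$; its area is the number of unit squares lying below the path and completely above the diagonal $y=x$. The $q$-Catalan polynomial is $C_k(q)=\sum_{P} q^{\mathrm{area}(P)}$, the sum over all Dyck paths $P$ of length $k$; in particular $C_0(q)=1$. (Equivalently, the pairs in $\mathcal{T}_k$ are the standard fillings of a two-row array with $k$ columns, columns decreasing bottom to top, both rows decreasing left to right, and $w$ is its column reading word, read columns right to left, each bottom to top.) *)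

(* Defs.v *)
From HB Require Import structures.
From mathcomp Require Import all_boot all_order all_algebra.
Set Implicit Arguments. Unset Strict Implicit. Unset Printing Implicit Defensive.
Import GRing.Theory.

Definition invnum (w : seq nat) : nat :=
  \sum_(i < size w) \sum_(j < size w | i < j) (nth 0 w j < nth 0 w i).

Definition inT (k : nat) (b t : seq nat) : bool :=
  [&& size b == k, size t == k,
      all (fun x => x \in iota 1 (2 * k)) (b ++ t),
      all (fun x => x \in b ++ t) (iota 1 (2 * k)),
      sorted gtn b, sorted gtn t &
      all (fun i => nth 0 t i < nth 0 b i) (iota 0 k)].

Definition wordT (b t : seq nat) : seq nat :=
  flatten [seq [:: p.1; p.2] | p <- rev (zip b t)].

(* lattice paths as step sequences: true = NORTH (0,1), false = EAST (1,0).
   Position after the first i steps is (xpos s i, ypos s i). *)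
Definition xpos (s : seq bool) (i : nat) : nat := count negb (take i s).
Definition ypos (s : seq bool) (i : nat) : nat := count id (take i s).

Definition dyckb (k : nat) (s : seq bool) : bool :=
  [&& size s == 2 * k, count id s == k &
      all (fun i => xpos s i <= ypos s i) (iota 0 (size s).+1)].

(* area: unit squares below the path and completely above the diagonal;
   an EAST step from (x,y) contributes the squares [x,x+1]x[h,h+1], x+1 <= h < y *)
Definition area (s : seq bool) : nat :=
  \sum_(i < size s | ~~ nth false s i) (ypos s i - xpos s i - 1).

Definition qCatalan (k : nat) : {poly int} :=
  \sum_(P : (2 * k).-tuple bool | dyckb k P) 'X^(area P).

(* the generating polynomial sum_{(b,t) in T_k} q^{inv w} ; entries of b,t
   range over 'I_(2k+1) = {0,...,2k}, which contains {1,...,2k} *)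
Definition invGen (k : nat) : {poly int} :=
  \sum_(bt : k.-tuple 'I_(2 * k).+1 * k.-tuple 'I_(2 * k).+1
        | inT k (map val bt.1) (map val bt.2))
     'X^(invnum (wordT (map val bt.1) (map val bt.2))).

(* Main.v *)
Require Import Defs.
From HB Require Import structures.
From mathcomp Require Import all_boot all_order all_algebra.
From mathcomp Require Import zify.
Set Implicit Arguments. Unset Strict Implicit. Unset Printing Implicit Defensive.

Fixpoint invr (w : seq nat) : nat :=
  if w is x :: w' then count (fun y => y < x) w' + invr w' else 0.

Lemma sum_bool (T : Type) (P : pred T) w : \sum_(x <- w) (P x : nat) = count P w.
Proof. by elim: w => [|a w IH]; rewrite ?big_nil // big_cons IH. Qed.

Lemma invnumE w : invnum w = invr w.
Proof.
elim: w => [|a w IH]; first by rewrite /invnum big_ord0.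
rewrite /invnum /= big_ord_recl /=.
rewrite big_mkcond big_ord_recl /= add0n.
rewrite -IH /invnum; congr (_ + _).
  rewrite -(sum_bool (fun y => y < a)) (big_nth 0) big_mkord.
  by apply: eq_bigr => i _.
apply: eq_bigr => i _.
rewrite big_mkcond big_ord_recl /= add0n [RHS]big_mkcond.
by apply: eq_bigr => j _; rewrite /bump /= !add1n ltnS.
Qed.

Fixpoint tri n := if n is m.+1 then tri m + m else 0.
Definition Nl (b t : seq nat) := \sum_(y <- b) count (fun x => x < y) t.
Fixpoint pw (b t : seq nat) : bool :=
  match b, t with x :: b', y :: t' => (y < x) && pw b' t' | _, _ => true end.

Lemma invr_cat w v : invr (w ++ v) = invr w + \sum_(a <- w) count (fun z => z < a) v + invr v.
Proof.
elim: w => [|a w IH] /=; first by rewrite big_nil.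
by rewrite big_cons IH count_cat; lia.
Qed.

Lemma wordT_cons x b y t : wordT (x::b) (y::t) = wordT b t ++ [:: x; y].
Proof. by rewrite /wordT /= rev_cons map_rcons -cats1 flatten_cat /=. Qed.

Lemma count_wordT (P : pred nat) b t : size b = size t ->
  count P (wordT b t) = count P b + count P t.
Proof.
elim: b t => [|x b IH] [|y t] //= [Hs].
rewrite wordT_cons count_cat IH //=; lia.
Qed.

Lemma all_lt_count (x : nat) s : all (fun z => z < x) s ->
  count (fun z => z < x) s = size s /\ count (fun z => x < z) s = 0.
Proof.
elim: s => [|a s IH] //= /andP [Ha Hs]; have [-> ->] := IH Hs.
by rewrite Ha ltnNge ltnW.
Qed.

Lemma sorted_all x s : sorted gtn (x :: s) -> all (fun z => z < x) s.
Proof. by move=> H; apply: (order_path_min _ H) => a b c /= h1 h2; apply: ltn_trans h1. Qed.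

Lemma inv_wordT b t : size b = size t -> sorted gtn b -> sorted gtn t -> pw b t ->
  invr (wordT b t) + tri (size b) = Nl b t.
Proof.
elim: b t => [|x b IH] [|y t] //=; first by rewrite /Nl big_nil.
move=> [Hs] Hb Ht /andP [Hyx Hp].
have Hb' := sorted_all Hb; have Ht' := sorted_all Ht.
have Ht'' : all (fun z => z < x) t by apply/allP => z /(allP Ht') h; apply: ltn_trans Hyx.
rewrite wordT_cons invr_cat /=.

have E1 : \sum_(a <- wordT b t) count (fun z => z < a) [:: x; y] =
   count (fun a => x < a) (wordT b t) + count (fun a => y < a) (wordT b t).
  rewrite -!sum_bool -big_split /=; apply: eq_bigr => a _; lia.
rewrite E1 !count_wordT //.
have [_ -> ] := all_lt_count Hb'; have [_ -> ] := all_lt_count Ht''.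
have [_ -> ] := all_lt_count Ht'.
rewrite /Nl big_cons /= Hyx.
have [-> _ ] := all_lt_count Ht''.
have E2 : \sum_(j <- b) ((y < j) + count (fun x0 : nat => x0 < j) t) =
   count (fun a => y < a) b + \sum_(j <- b) count (fun x0 : nat => x0 < j) t.
  by rewrite big_split /= sum_bool.
rewrite E2 -/(Nl b t) -(IH t) //; try by [apply: path_sorted Hb|apply: path_sorted Ht].
by rewrite Hs /=; lia.

Qed.

Definition pos (s : seq bool) (c : bool) : seq nat :=
  rev (map S [seq i <- iota 0 (size s) | nth false s i == c]).

Lemma filter_iota_min m n : [seq i <- iota 0 n | i < m] = iota 0 (minn m n).
Proof.
case: (leqP m n) => H.
  by rewrite -(filter_iota_ltn 0 H).
rewrite -[RHS]filter_predT; apply: eq_in_filter => i.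
by rewrite mem_iota /= => Hi; apply: ltn_trans H.
Qed.

Lemma count_iota_lt (Q : pred nat) m n :
  count (fun i => (i < m) && Q i) (iota 0 n) = count Q (iota 0 (minn m n)).
Proof.
rewrite -filter_iota_min count_filter; apply: eq_count => i /=; by rewrite andbC.
Qed.

Lemma take_mk (s : seq bool) m : take m s = map (nth false s) (iota 0 (minn m (size s))).
Proof. by rewrite -take_iota map_take -/(mkseq _ _) mkseq_nth. Qed.

Lemma cnt_take s c m : count (fun z => z <= m) (pos s c) = count (pred1 c) (take m s).
Proof.
rewrite /pos count_rev count_map count_filter take_mk count_map -count_iota_lt.
by apply: eq_count => i /=.
Qed.

Lemma size_pos s c : size (pos s c) = count (pred1 c) s.
Proof.
rewrite /pos size_rev size_map size_filter -[in RHS](mkseq_nth false s) /mkseq count_map.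
by apply: eq_count => i; rewrite /= eq_sym.
Qed.

Lemma take_rc (s : seq bool) c i : i <= size s -> take i (rcons s c) = take i s.
Proof. by move=> H; rewrite -cats1 takel_cat. Qed.

Definition Sx s := \sum_(0 <= i < size s | ~~ nth false s i) xpos s i.
Lemma sum_xpos0 s : Sx s = tri (count negb s).
Proof.
elim/last_ind: s => [|s c IH]; first by rewrite /Sx big_geq.
rewrite /Sx.
move: IH; rewrite /Sx => IH.
rewrite size_rcons big_mkcond big_nat_recr //=.
rewrite (@eq_big_nat _ _ _ 0 (size s) _
   (fun i => if ~~ nth false s i then xpos s i else 0)); last first.
  by move=> i /andP [_ Hi]; rewrite nth_rcons Hi /xpos take_rc // ltnW.
rewrite -big_mkcond IH nth_rcons ltnn eqxx /xpos take_rc // take_size.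
by rewrite -cats1 count_cat; case: c => /=; rewrite !addn0 ?addn1.
Qed.

Lemma sum_xpos s : \sum_(i < size s | ~~ nth false s i) xpos s i = tri (count negb s).
Proof. by rewrite -sum_xpos0 /Sx big_mkord. Qed.

Lemma sum_ypos s : \sum_(i < size s | ~~ nth false s i) ypos s i = Nl (pos s false) (pos s true).
Proof.
rewrite /Nl {1}/pos big_rev big_map big_filter.
rewrite (_ : iota 0 (size s) = index_iota 0 (size s)); last by rewrite /index_iota subn0.
rewrite big_mkord; apply: eq_big => [i|i _]; first by rewrite eqbF_neg.
rewrite (eq_count (a2 := fun z => z <= i)) // cnt_take /ypos.
by apply: eq_count => z; rewrite /= eqb_id.
Qed.

Lemma cnt_nid s : count negb s + count id s = size s.
Proof. by elim: s => //= -[] s IH; lia. Qed.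

Lemma sum_one s : \sum_(i < size s | ~~ nth false s i) 1 = count negb s.
Proof.
rewrite -(big_mkord (fun i => ~~ nth false s i) (fun _ => 1)) /index_iota subn0 sum1_count.
by rewrite -{3}(mkseq_nth false s) /mkseq count_map.
Qed.

Lemma area_eq k s : dyckb k s -> area s + k + tri k = Nl (pos s false) (pos s true).
Proof.
case/and3P => /eqP Hs /eqP Hc /allP Hd.
have Hn : count negb s = k by have := cnt_nid s; lia.
rewrite -sum_ypos -{2}Hn -sum_xpos -{1}Hn -sum_one /area -!big_split /=.
apply: eq_bigr => i Hi.
have := Hd i.+1; rewrite mem_iota /= ltnS ltn_ord => /(_ isT).
rewrite /xpos /ypos (take_nth false) // -cats1 !count_cat /= (negbTE Hi) /=.
lia.
Qed.

Lemma mem_pos s c x : (x \in pos s c) = (0 < x <= size s) && (nth false s x.-1 == c).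
Proof.
rewrite /pos mem_rev; case: x => [|x] /=.
  by apply/mapP => -[].
by rewrite (mem_map succn_inj) mem_filter mem_iota /= add0n andbC.
Qed.

Lemma sorted_pos s c : sorted gtn (pos s c).
Proof.
rewrite /pos rev_sorted sorted_map.
have : sorted ltn [seq i <- iota 0 (size s) | nth false s i == c].
  by apply: sorted_filter; [exact: ltn_trans | exact: iota_ltn_sorted].
by apply: sub_sorted => x y /=.
Qed.

Lemma pwE b t : size b = size t ->
  pw b t = all (fun i => nth 0 t i < nth 0 b i) (iota 0 (size b)).
Proof.
elim: b t => [|x b IH] [|y t] //= [Hs].
rewrite -[1]/(1 + 0) iotaDl all_map IH //.
Qed.

Lemma cnt_all (y m : nat) t : all (fun z => z < y) t -> y <= m ->
  count (fun z => z <= m) t = size t.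
Proof.
move=> H Hy; apply/eqP; rewrite -all_count; apply/allP => z /(allP H) /= h.
by apply: ltnW; apply: leq_trans Hy.
Qed.

Lemma pw_ballot b t : size b = size t -> sorted gtn b -> sorted gtn t -> pw b t ->
  forall m, count (fun z => z <= m) b <= count (fun z => z <= m) t.
Proof.
elim: b t => [|x b IH] [|y t] //= [Hs] Hb Ht /andP [Hyx Hp] m.
have Hb' := sorted_all Hb; have Ht' := sorted_all Ht.
case: (leqP x m) => Hxm.
  rewrite (cnt_all Hb' Hxm) (cnt_all Ht' (ltnW (leq_trans Hyx Hxm))).
  rewrite (ltnW (leq_trans Hyx Hxm)) Hs; lia.
have := IH t Hs (path_sorted Hb) (path_sorted Ht) Hp m.
case: (y <= m) => /= H; lia.
Qed.

Lemma ballot_pw b t : size b = size t -> sorted gtn b -> sorted gtn t ->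
  (forall z, z \in b -> z \notin t) ->
  (forall m, count (fun z => z <= m) b <= count (fun z => z <= m) t) -> pw b t.
Proof.
elim: b t => [|x b IH] [|y t] //= [Hs] Hb Ht Hd Hc.
have Hb' := sorted_all Hb; have Ht' := sorted_all Ht.
have Hyx : y < x.
  case: (ltngtP y x) => // H.
    have := Hc x; rewrite leqnn (cnt_all Hb' (leqnn x)) (leqNgt y x) H /=.
    have := count_size (fun z => z <= x) t; lia.
  by have := Hd x; rewrite inE eqxx inE H eqxx => /(_ isT).
rewrite Hyx /=; apply: IH => //; [exact: path_sorted Hb | exact: path_sorted Ht | |].
  by move=> z zb; have := Hd z; rewrite !inE zb orbT negb_or => /(_ isT) /andP [].
move=> m; case: (leqP x m) => Hxm.
  rewrite (cnt_all Ht' (ltnW (leq_trans Hyx Hxm))) -Hs; exact: count_size.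
have := Hc m; rewrite (leqNgt x m) Hxm /=.
case: (leqP y m) => Hym /= H.
  rewrite (cnt_all Ht' Hym) -Hs; exact: count_size.
by rewrite add0n in H.
Qed.

Lemma cnt_pf s : count (pred1 false) s = count negb s.
Proof. by apply: eq_count => -[]. Qed.
Lemma cnt_pt s : count (pred1 true) s = count id s.
Proof. by apply: eq_count => -[]. Qed.

Lemma dyck_ballot k s : dyckb k s -> forall m,
  count (fun z => z <= m) (pos s false) <= count (fun z => z <= m) (pos s true).
Proof.
case/and3P => _ _ /allP Hd m; rewrite !cnt_take cnt_pf cnt_pt.
case: (leqP m (size s)) => Hm.
  by apply: Hd; rewrite mem_iota.
rewrite take_oversize ?(ltnW Hm) //.
have := Hd (size s); rewrite mem_iota /= ltnS leqnn => /(_ isT).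
by rewrite /xpos /ypos take_size.
Qed.

Lemma dyck_inT k s : dyckb k s -> inT k (pos s false) (pos s true).
Proof.
move=> D; have := D; case/and3P => /eqP Hs /eqP Hc /allP Hd.
have Hn : count negb s = k by have := cnt_nid s; lia.
have Sf : size (pos s false) = k by rewrite size_pos cnt_pf.
have St : size (pos s true) = k by rewrite size_pos cnt_pt.
rewrite /inT Sf St !eqxx !sorted_pos /=.
apply/and3P; split.
- apply/allP => x; rewrite mem_cat !mem_pos mem_iota Hs.
  by case/orP => /andP [/andP [H1 H2] _]; apply/andP; split; lia.
- apply/allP => x; rewrite mem_iota mem_cat !mem_pos Hs => /andP [H1 H2].
  have -> : 0 < x <= 2 * k by apply/andP; split; lia.
  by case: (nth false s x.-1).
- rewrite -{1}Sf -pwE; last by rewrite Sf St.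
  apply: ballot_pw; rewrite ?Sf ?St ?sorted_pos //; last exact: dyck_ballot D.
  by move=> z; rewrite !mem_pos => /andP [_ /eqP ->]; rewrite andbF.
Qed.

Definition gseq k (t : seq nat) := mkseq (fun i => i.+1 \in t) (2 * k).

Lemma inT_facts k b t : inT k b t ->
  [/\ size b = k, size t = k, sorted gtn b, sorted gtn t & [/\ pw b t,
      (forall x, x \in t -> 0 < x <= 2 * k) &
      (forall x, (x \in b) = (0 < x <= 2 * k) && (x \notin t))]].
Proof.
case/and5P => /eqP Sb /eqP St /allP Hin /allP Hcov /andP [Sob /andP [Sot Hp]].
have Hiota x : (x \in iota 1 (2 * k)) = (0 < x <= 2 * k).
  by rewrite mem_iota; apply/idP/idP => /andP [h1 h2]; apply/andP; split; lia.
have Hu : uniq (b ++ t).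
  rewrite (uniq_size_uniq (iota_uniq 1 (2 * k))).
    by rewrite size_cat size_iota Sb St; apply/eqP; lia.
  by move=> x; apply/idP/idP => [/Hcov|/Hin].
move: (Hu); rewrite cat_uniq => /and3P [_ Hdis _].
split => //; split.
- by rewrite pwE Sb ?St.
- by move=> x xt; rewrite -Hiota; apply: Hin; rewrite mem_cat xt orbT.
- move=> x; apply/idP/idP.
    move=> xb; rewrite -Hiota Hin ?mem_cat ?xb //=.
    by apply/negP => xt; move/hasP: Hdis; apply; exists x.
  case/andP; rewrite -Hiota => /Hcov; rewrite mem_cat => /orP [] // -> //.
Qed.

Lemma gtn_trans : transitive gtn.
Proof. by move=> a x c /= h1 h2; apply: ltn_trans h1. Qed.
Lemma gtn_irr : irreflexive gtn.
Proof. by move=> x /=; rewrite ltnn. Qed.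

Lemma nth_g k t x : 0 < x <= 2 * k -> nth false (gseq k t) x.-1 = (x \in t).
Proof.
by move=> /andP [h1 h2]; rewrite nth_mkseq ?prednK //; case: x h1 h2 => //.
Qed.

Lemma pos_g k b t : inT k b t -> pos (gseq k t) true = t /\ pos (gseq k t) false = b.
Proof.
case/inT_facts => Sb St Sob Sot [Hp Ht Hb].
split; apply: (irr_sorted_eq gtn_trans gtn_irr) => //; try exact: sorted_pos.
  move=> x; rewrite mem_pos size_mkseq.
  case H: (0 < x <= 2 * k) => /=; first by rewrite nth_g // eqb_id.
  by apply/esym/negP => /Ht; rewrite H.
move=> x; rewrite mem_pos size_mkseq Hb.
by case H: (0 < x <= 2 * k) => //=; rewrite nth_g //.
Qed.

Lemma g_dyck k b t : inT k b t -> dyckb k (gseq k t).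
Proof.
move=> H; have [Pt Pf] := pos_g H; case/inT_facts: H => Sb St Sob Sot [Hp Ht Hb].
rewrite /dyckb size_mkseq eqxx andTb.
apply/andP; split.
  by rewrite -cnt_pt -size_pos Pt St.
apply/allP => i _; rewrite /xpos /ypos -cnt_pf -cnt_pt -!cnt_take Pt Pf.
by apply: pw_ballot => //; rewrite Sb.
Qed.

Lemma g_pos k s : size s = 2 * k -> gseq k (pos s true) = s.
Proof.
move=> Hs; rewrite /gseq -Hs -[RHS](mkseq_nth false s); apply: eq_mkseq => i.
rewrite mem_pos /=; case: (ltnP i (size s)) => H; first by rewrite eqb_id.
by rewrite nth_default.
Qed.

Definition mkT k (l : seq nat) : k.-tuple 'I_(2 * k).+1 := [tuple inord (nth 0 l i) | i < k].
Definition hmap k (P : (2 * k).-tuple bool) := (mkT k (pos P false), mkT k (pos P true)).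
Definition gmap k (bt : k.-tuple 'I_(2 * k).+1 * k.-tuple 'I_(2 * k).+1) : (2 * k).-tuple bool :=
  [tuple (val i).+1 \in map val bt.2 | i < 2 * k].
Arguments mkT : clear implicits.
Arguments hmap : clear implicits.
Arguments gmap : clear implicits.

Lemma val_mktuple n (T : Type) (f : nat -> T) : tval [tuple f i | i < n] = mkseq f n.
Proof. by rewrite /= /mkseq -val_enum_ord -map_comp. Qed.

Lemma val_mkT k l : size l = k -> (forall x, x \in l -> x <= 2 * k) -> map val (mkT k l) = l.
Proof.
move=> Hs Hb; rewrite /mkT (@val_mktuple _ _ (fun i => @inord (2 * k) (nth 0 l i))) /mkseq -map_comp -[RHS](mkseq_nth 0 l) /mkseq Hs.
apply: eq_map => i /=; rewrite inordK // ltnS.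
case: (ltnP i (size l)) => H; first by apply: Hb; exact: mem_nth.
by rewrite nth_default.
Qed.

Lemma val_g k bt : tval (gmap k bt) = gseq k (map val bt.2).
Proof. by rewrite /gmap (@val_mktuple _ _ (fun i => i.+1 \in map val bt.2)). Qed.

Lemma val_g' k bt : \val (gmap k bt) = gseq k (map val bt.2).
Proof. exact: val_g. Qed.

Lemma pos_bound (s : seq bool) k c x : size s = 2 * k -> x \in pos s c -> x <= 2 * k.
Proof. by move=> Hs; rewrite mem_pos Hs => /andP [/andP [_ h] _]. Qed.

Lemma condE k (P : (2 * k).-tuple bool) :
  inT k (map val (hmap k P).1) (map val (hmap k P).2) && (gmap k (hmap k P) == P) = dyckb k P.
Proof.
have Hs : size P = 2 * k by rewrite size_tuple.
apply/idP/idP.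
  case/andP => H /eqP E; rewrite -E val_g; exact: g_dyck H.
move=> D; have H := dyck_inT D; have [Sb St _ _ _] := inT_facts H.
rewrite /hmap /= !val_mkT //; try by move=> x; apply: pos_bound.
apply/andP; split => //.
by apply/eqP; apply: val_inj; rewrite val_g' /= val_mkT ?g_pos //; move=> x; apply: pos_bound.
Qed.

Lemma hg k (bt : k.-tuple 'I_(2 * k).+1 * k.-tuple 'I_(2 * k).+1) : inT k (map val bt.1) (map val bt.2) -> hmap k (gmap k bt) = bt.
Proof.
case: bt => b t /= H; have [Pt Pf] := pos_g H.
rewrite /hmap val_g Pt Pf /=.
have Hv (u : k.-tuple 'I_(2 * k).+1) : mkT k (map val u) = u.
  apply: val_inj; apply: (inj_map val_inj); rewrite val_mkT ?size_map ?size_tuple //.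
  by move=> x /mapP [y _ ->]; rewrite -ltnS ltn_ord.
by rewrite !Hv.
Qed.

Import GRing.Theory.
Local Open Scope ring_scope.

Theorem mainTheorem1 (k : nat) : invGen k = 'X^k * qCatalan k.
Proof.
rewrite /invGen /qCatalan (reindex_onto (hmap k) (gmap k)); last exact: hg.
rewrite big_distrr /=; apply: eq_big => P; first exact: condE.
rewrite condE => D.
have H := dyck_inT D; have [Sb St Sob Sot [Hp _ _]] := inT_facts H.
have Hs : size P = 2 * k by rewrite size_tuple.
rewrite /= !val_mkT //; try by move=> x; apply: pos_bound.
rewrite -exprD; congr ('X^ _).
have := inv_wordT (etrans Sb (esym St)) Sob Sot Hp; have := area_eq D.
rewrite invnumE Sb; lia.
Qed.
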